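(* Let $T:X\rightrightarrows X^*$ be a monotone operator on a real Banach space $X$, let $i\in\{0,1\}$, let $C\in\mathcal C_i(T)$ and $K\in\mathcal C_0(T+\partial I_C)$; if $i=0$ assume also that $\overline{D_T}$ is convex. Then $C\cap K\in\mathcal C_i(T)$.
   Context: $I_C$ is the indicator function of $C$ and $\partial I_C$ its normal cone operator; $(T+\partial I_C)(x)=T(x)+\partial I_C(x)$, so $D_{T+\partial I_C}=D_T\cap C$. For an operator $S$, $\mathcal C_0(S)=\{C\subset X: C$ closed, convex, $D_S\cap\mathrm{int}\,C\ne\emptyset\}$ and $\mathcal C_1(S)=\{C\subset X: C$ closed, convex, and $\bigcup_{\lambda>0}\lambda(\mathrm{co}\,D_S-C)$ is a closed subspace of $X\}$. *)

(* Defs.v *)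
From Stdlib Require Import Reals.
Open Scope R_scope.

Record RBanach := {
  bs_car :> Type;
  bs_zero : bs_car;
  bs_add : bs_car -> bs_car -> bs_car;
  bs_opp : bs_car -> bs_car;
  bs_scal : R -> bs_car -> bs_car;
  bs_norm : bs_car -> R;
  bs_add_assoc : forall x y z, bs_add x (bs_add y z) = bs_add (bs_add x y) z;
  bs_add_comm : forall x y, bs_add x y = bs_add y x;
  bs_add_0 : forall x, bs_add x bs_zero = x;
  bs_add_opp : forall x, bs_add x (bs_opp x) = bs_zero;
  bs_scal_assoc : forall a b x, bs_scal a (bs_scal b x) = bs_scal (a * b) x;
  bs_scal_1 : forall x, bs_scal 1 x = x;
  bs_scal_distr_l : forall a x y, bs_scal a (bs_add x y) = bs_add (bs_scal a x) (bs_scal a y);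
  bs_scal_distr_r : forall a b x, bs_scal (a + b) x = bs_add (bs_scal a x) (bs_scal b x);
  bs_norm_eq0 : forall x, bs_norm x = 0 -> x = bs_zero;
  bs_norm_triangle : forall x y, bs_norm (bs_add x y) <= bs_norm x + bs_norm y;
  bs_norm_scal : forall a x, bs_norm (bs_scal a x) = Rabs a * bs_norm x;
  bs_complete : forall u : nat -> bs_car,
    (forall eps, 0 < eps -> exists N, forall m n, (N <= m)%nat -> (N <= n)%nat ->
        bs_norm (bs_add (u m) (bs_opp (u n))) < eps) ->
    exists l, forall eps, 0 < eps -> exists N, forall n, (N <= n)%nat ->
        bs_norm (bs_add (u n) (bs_opp l)) < eps
}.

Arguments bs_zero {_}.
Arguments bs_add {_} _ _.
Arguments bs_opp {_} _.
Arguments bs_scal {_} _ _.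
Arguments bs_norm {_} _.

Definition bs_sub {X : RBanach} (x y : X) : X := bs_add x (bs_opp y).

Record dual (X : RBanach) := {
  df :> X -> R;
  df_add : forall x y, df (bs_add x y) = df x + df y;
  df_scal : forall a x, df (bs_scal a x) = a * df x;
  df_bounded : exists M, forall x, Rabs (df x) <= M * bs_norm x
}.

Definition operator (X : RBanach) := X -> dual X -> Prop.

Definition monotone {X : RBanach} (T : operator X) : Prop :=
  forall x y (xs ys : dual X), T x xs -> T y ys ->
    0 <= xs (bs_sub x y) - ys (bs_sub x y).

Definition dom {X : RBanach} (S : operator X) : X -> Prop :=
  fun x => exists xs, S x xs.

Definition closure {X : RBanach} (A : X -> Prop) : X -> Prop :=
  fun x => forall eps, 0 < eps -> exists y, A y /\ bs_norm (bs_sub x y) < eps.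

Definition is_closed {X : RBanach} (A : X -> Prop) : Prop :=
  forall x, closure A x -> A x.

Definition interior {X : RBanach} (A : X -> Prop) : X -> Prop :=
  fun x => exists eps, 0 < eps /\ forall y, bs_norm (bs_sub y x) < eps -> A y.

Definition convex {X : RBanach} (A : X -> Prop) : Prop :=
  forall x y t, 0 <= t <= 1 -> A x -> A y ->
    A (bs_add (bs_scal t x) (bs_scal (1 - t) y)).

Definition conv_hull {X : RBanach} (A : X -> Prop) : X -> Prop :=
  fun x => forall S, convex S -> (forall y, A y -> S y) -> S x.

Definition is_subspace {X : RBanach} (A : X -> Prop) : Prop :=
  A bs_zero /\ (forall x y, A x -> A y -> A (bs_add x y)) /\
  (forall a x, A x -> A (bs_scal a x)).

Definition closed_subspace {X : RBanach} (A : X -> Prop) : Prop :=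
  is_subspace A /\ is_closed A.

(** Normal cone operator ∂I_C (empty outside C). *)
Definition normal_cone {X : RBanach} (C : X -> Prop) : operator X :=
  fun x xs => C x /\ forall y, C y -> xs (bs_sub y x) <= 0.

Definition op_sum {X : RBanach} (S1 S2 : operator X) : operator X :=
  fun x zs => exists us vs, S1 x us /\ S2 x vs /\ forall y, zs y = us y + vs y.

Definition cone_gen {X : RBanach} (S : operator X) (C : X -> Prop) : X -> Prop :=
  fun z => exists l a c, 0 < l /\ conv_hull (dom S) a /\ C c /\
    z = bs_scal l (bs_sub a c).

Definition calC0 {X : RBanach} (S : operator X) (C : X -> Prop) : Prop :=
  is_closed C /\ convex C /\ exists x, dom S x /\ interior C x.

Definition calC1 {X : RBanach} (S : operator X) (C : X -> Prop) : Prop :=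
  is_closed C /\ convex C /\ closed_subspace (cone_gen S C).

Definition calC (i : nat) {X : RBanach} (S : operator X) (C : X -> Prop) : Prop :=
  match i with 0%nat => calC0 S C | _ => calC1 S C end.

Definition setI {X : Type} (A B : X -> Prop) : X -> Prop := fun x => A x /\ B x.

(* Main.v *)
Require Import Defs.
From Stdlib Require Import Reals Lra.
Open Scope R_scope.

Lemma add0l (X : RBanach) (x : X) : bs_add bs_zero x = x.
Proof. rewrite bs_add_comm; apply bs_add_0. Qed.

Lemma add_swap (X : RBanach) (x y z : X) : bs_add x (bs_add y z) = bs_add y (bs_add x z).
Proof. rewrite !bs_add_assoc, (bs_add_comm _ x y). reflexivity. Qed.

Lemma add_cancel (X : RBanach) (x y z : X) : bs_add x y = bs_add x z -> y = z.
Proof.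
  intros H. assert (H2 : bs_add (bs_opp x) (bs_add x y) = bs_add (bs_opp x) (bs_add x z)) by (rewrite H; reflexivity).
  rewrite !bs_add_assoc, (bs_add_comm _ (bs_opp x) x), bs_add_opp, !add0l in H2. exact H2.
Qed.

Lemma scal0 (X : RBanach) (x : X) : bs_scal 0 x = bs_zero.
Proof.
  symmetry; apply (add_cancel X (bs_scal 0 x)).
  rewrite bs_add_0, <- bs_scal_distr_r. f_equal; ring.
Qed.

Lemma scal_zero (X : RBanach) (a : R) : bs_scal a (@bs_zero X) = bs_zero.
Proof.
  symmetry; apply (add_cancel X (bs_scal a bs_zero)).
  rewrite bs_add_0, <- bs_scal_distr_l, bs_add_0. reflexivity.
Qed.

Lemma opp_eq (X : RBanach) (x y : X) : bs_add x y = bs_zero -> y = bs_opp x.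
Proof. intros H. apply (add_cancel X x). rewrite H, bs_add_opp. reflexivity. Qed.

Lemma opp_scal (X : RBanach) (x : X) : bs_opp x = bs_scal (-1) x.
Proof.
  symmetry; apply opp_eq. rewrite <- (bs_scal_1 X x) at 1.
  rewrite <- bs_scal_distr_r. replace (1 + -1) with 0 by ring. apply scal0.
Qed.

Lemma scal_opp (X : RBanach) (a : R) (x : X) : bs_scal a (bs_opp x) = bs_opp (bs_scal a x).
Proof. rewrite !opp_scal, !bs_scal_assoc. f_equal; ring. Qed.

Lemma opp_add (X : RBanach) (x y : X) : bs_opp (bs_add x y) = bs_add (bs_opp x) (bs_opp y).
Proof. rewrite !opp_scal. apply bs_scal_distr_l. Qed.

Lemma opp_opp (X : RBanach) (x : X) : bs_opp (bs_opp x) = x.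
Proof. symmetry. apply opp_eq. rewrite bs_add_comm. apply bs_add_opp. Qed.

Lemma norm_opp (X : RBanach) (x : X) : bs_norm (bs_opp x) = bs_norm x.
Proof. rewrite opp_scal, bs_norm_scal. replace (Rabs (-1)) with 1. ring.
  rewrite Rabs_left by lra. ring. Qed.

Lemma norm_zero (X : RBanach) : bs_norm (@bs_zero X) = 0.
Proof. rewrite <- (scal0 X bs_zero), bs_norm_scal, Rabs_R0. ring. Qed.

Lemma sub_diag (X : RBanach) (x : X) : bs_sub x x = bs_zero.
Proof. apply bs_add_opp. Qed.

Lemma linL (X : RBanach) (s : R) (u v w : X) :
  bs_sub (bs_add (bs_scal s u) w) (bs_add (bs_scal s v) w) = bs_scal s (bs_sub u v).
Proof.
  unfold bs_sub. rewrite opp_add, bs_scal_distr_l, scal_opp.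
  rewrite <- bs_add_assoc. f_equal. rewrite add_swap, bs_add_opp, bs_add_0. reflexivity.
Qed.

Lemma sub_tri (X : RBanach) (y z w : X) : bs_sub y z = bs_add (bs_sub y w) (bs_sub w z).
Proof.
  unfold bs_sub. rewrite <- bs_add_assoc. f_equal.
  rewrite bs_add_assoc, (bs_add_comm _ (bs_opp w) w), bs_add_opp, add0l. reflexivity.
Qed.

Lemma sub_opp (X : RBanach) (z w : X) : bs_opp (bs_sub z w) = bs_sub w z.
Proof. unfold bs_sub. rewrite opp_add, opp_opp, bs_add_comm. reflexivity. Qed.

Lemma norm_sub_sym (X : RBanach) (z w : X) : bs_norm (bs_sub z w) = bs_norm (bs_sub w z).
Proof. rewrite <- sub_opp, norm_opp. reflexivity. Qed.

Lemma subI4 (X : RBanach) (a b : X) : bs_sub (bs_add a b) a = b.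
Proof. unfold bs_sub. rewrite bs_add_comm, bs_add_assoc, (bs_add_comm _ (bs_opp a)), bs_add_opp, add0l. reflexivity. Qed.

Lemma addI6 (X : RBanach) (z y : X) : bs_add z (bs_sub y z) = y.
Proof. unfold bs_sub. rewrite add_swap, bs_add_opp, bs_add_0. reflexivity. Qed.

Lemma split_vec (X : RBanach) (s : R) (x : X) : x = bs_add (bs_scal s x) (bs_scal (1 - s) x).
Proof. rewrite <- bs_scal_distr_r. replace (s + (1 - s)) with 1 by ring. rewrite bs_scal_1; reflexivity. Qed.

Lemma hull_convex (X : RBanach) (A : X -> Prop) : convex (conv_hull A).
Proof. intros x y t ht hx hy S hS hA. apply hS; [exact ht | apply hx | apply hy]; auto. Qed.

Lemma hull_incl (X : RBanach) (A : X -> Prop) x : A x -> conv_hull A x.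
Proof. intros H S _ hA; auto. Qed.

Lemma closure_incl (X : RBanach) (A : X -> Prop) x : A x -> closure A x.
Proof. intros H e he. exists x. split; auto. rewrite sub_diag, norm_zero; lra. Qed.

Lemma closed_subspace_ext (X : RBanach) (A B : X -> Prop) :
  (forall z, A z <-> B z) -> closed_subspace B -> closed_subspace A.
Proof.
  intros E [[H0 [Hadd Hsc]] Hcl]. split; [split; [|split]|].
  - apply E; auto.
  - intros x y hx hy; apply E; apply Hadd; apply E; auto.
  - intros a x hx; apply E; apply Hsc; apply E; auto.
  - intros x hx. apply E, Hcl. intros e he. destruct (hx e he) as [y [hy hn]].
    exists y; split; auto; apply E; auto.
Qed.

Lemma closed_setI (X : RBanach) (C K : X -> Prop) :
  is_closed C -> is_closed K -> is_closed (setI C K).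
Proof.
  intros hC hK x hx. split.
  - apply hC. intros e he. destruct (hx e he) as [y [[h1 h2] h3]]. eauto.
  - apply hK. intros e he. destruct (hx e he) as [y [[h1 h2] h3]]. eauto.
Qed.

Lemma convex_setI (X : RBanach) (C K : X -> Prop) :
  convex C -> convex K -> convex (setI C K).
Proof. intros hC hK x y t ht [] []. split; auto. Qed.

Theorem lemma2p10 (X : RBanach) (T : operator X) (i : nat) (C K : X -> Prop) :
  monotone T ->
  (i = 0%nat \/ i = 1%nat) ->
  calC i T C ->
  calC0 (op_sum T (normal_cone C)) K ->
  (i = 0%nat -> convex (closure (dom T))) ->
  calC i T (setI C K).
Proof.
  intros _ Hi HC [HKc [HKv [x1 [[zs [us [vs [Tu [[Cx1 _] _]]]]] [r1 [hr1 Hr1]]]]]] Hconv.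
  assert (Dx1 : dom T x1) by (exists us; exact Tu).
  destruct Hi as [-> | ->]; simpl in *.
  - destruct HC as [HCc [HCv [x0 [Dx0 [r0 [hr0 Hr0]]]]]].
    specialize (Hconv eq_refl).
    split; [apply closed_setI; auto|]. split; [apply convex_setI; auto|].
    set (N := bs_norm (bs_sub x0 x1)).
    assert (HN : 0 <= N).
    { pose proof (bs_norm_triangle X (bs_sub x0 x1) (bs_opp (bs_sub x0 x1))).
      rewrite bs_add_opp, norm_zero, norm_opp in H. unfold N; lra. }
    set (t := r1 / (r1 + 2 * N)).
    assert (ht0 : 0 < t) by (unfold t; apply Rdiv_lt_0_compat; lra).
    assert (ht1 : t <= 1).
    { unfold t. apply Rmult_le_reg_r with (r := r1 + 2 * N); [lra|].
      field_simplify; lra. }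
    assert (htN : t * N < r1 / 2).
    { unfold t. apply Rmult_lt_reg_r with (r := 2 * (r1 + 2 * N)). nra.
      field_simplify; try lra. nra. }
    set (z := bs_add (bs_scal t x0) (bs_scal (1 - t) x1)).
    assert (Hz1 : bs_norm (bs_sub z x1) < r1 / 2).
    { unfold z. rewrite (split_vec X t x1) at 2. rewrite linL, bs_norm_scal, Rabs_pos_eq by lra.
      exact htN. }
    assert (Hzc : closure (dom T) z).
    { apply Hconv; [lra| apply closure_incl; auto | apply closure_incl; auto]. }
    set (rho := Rmin (t * r0) (r1 / 2)).
    assert (hrho : 0 < rho) by (unfold rho; apply Rmin_pos; nra).
    destruct (Hzc (rho / 2)) as [w [Dw Hw]]; [lra|].
    exists w. split; auto. exists (rho / 2). split; [lra|].
    intros y Hy.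
    assert (Hyz : bs_norm (bs_sub y z) < rho).
    { rewrite (sub_tri X y z w). eapply Rle_lt_trans; [apply bs_norm_triangle|].
      rewrite (norm_sub_sym X w z). lra. }
    assert (Hr0' : rho <= t * r0) by apply Rmin_l.
    assert (Hr1' : rho <= r1 / 2) by apply Rmin_r.
    split.
    + set (d := bs_sub y z).
      set (x' := bs_add x0 (bs_scal (1 / t) d)).
      assert (Cx' : C x').
      { apply Hr0. unfold x'. rewrite subI4, bs_norm_scal, Rabs_pos_eq.
        2:{ apply Rlt_le, Rdiv_lt_0_compat; lra. }
        apply Rmult_lt_reg_l with (r := t); auto.
        replace (t * (1 / t * bs_norm d)) with (bs_norm d) by (field; lra). unfold d; lra. }
      assert (E : y = bs_add (bs_scal t x') (bs_scal (1 - t) x1)).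
      { unfold x'. rewrite bs_scal_distr_l, bs_scal_assoc.
        replace (t * (1 / t)) with 1 by (field; lra). rewrite bs_scal_1.
        rewrite <- bs_add_assoc, (bs_add_comm _ d), bs_add_assoc.
        fold z. unfold d. rewrite addI6. reflexivity. }
      rewrite E. apply HCv; auto. lra.
    + apply Hr1. rewrite (sub_tri X y x1 z). eapply Rle_lt_trans; [apply bs_norm_triangle|]. lra.
  - destruct HC as [HCc [HCv HCs]].
    split; [apply closed_setI; auto|]. split; [apply convex_setI; auto|].
    apply (closed_subspace_ext X _ (cone_gen T C)); auto.
    intros z. split.
    + intros [l [a [c [hl [ha [[hc _] hz]]]]]]. exists l, a, c. auto.
    + intros [l [a [c [hl [ha [hc hz]]]]]].
      set (N := bs_norm (bs_sub c x1)).
      assert (HN : 0 <= N).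
      { pose proof (bs_norm_triangle X (bs_sub c x1) (bs_opp (bs_sub c x1))).
        rewrite bs_add_opp, norm_zero, norm_opp in H. unfold N; lra. }
      set (s := r1 / (r1 + N)).
      assert (hs0 : 0 < s) by (unfold s; apply Rdiv_lt_0_compat; lra).
      assert (hs1 : s <= 1) by (unfold s; apply Rmult_le_reg_r with (r := r1 + N); [lra|]; field_simplify; lra).
      assert (hsN : s * N < r1).
      { unfold s. apply Rmult_lt_reg_r with (r := r1 + N). lra.
        field_simplify; try lra. nra. }
      exists (l / s), (bs_add (bs_scal s a) (bs_scal (1 - s) x1)),
             (bs_add (bs_scal s c) (bs_scal (1 - s) x1)).
      split; [apply Rdiv_lt_0_compat; lra|].
      split; [apply hull_convex; auto; [lra| apply hull_incl; auto]|].
      split; [split|].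
      * apply HCv; auto; lra.
      * apply Hr1. rewrite (split_vec X s x1) at 2. rewrite linL, bs_norm_scal, Rabs_pos_eq by lra.
        exact hsN.
      * rewrite linL, bs_scal_assoc. replace (l / s * s) with l by (field; lra). exact hz.
Qed.
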